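(* Let $T\in\mathbb{R}$ and let $S:[0,1]\to\mathbb{R}$ be continuous with $S(0)=S(1)=0$. For $x,y\in\mathbb{R}$ set $x\oplus_S y=\min_{p\in[0,1]}\big(px+(1-p)y-T\,S(p)\big)$. Let $\mathbf{T}$ be an $(n,2)$-tree with $n\ge2$. Then for all $x_1,\ldots,x_n\in\mathbb{R}$, $$(x_1\oplus_S\cdots\oplus_S x_n)_{\mathbf{T}}=\min_{p\in\Delta_n}\Big(\sum_{i=1}^n p_ix_i-T\,S_{\mathbf{T}}(p_1,\ldots,p_n)\Big).$$
   Context: An $(n,2)$-tree is a finite rooted tree in which every vertex is either a leaf or has exactly two children, ordered as a left and a right child, and whose $n$ leaves are labelled bijectively by $\{1,\ldots,n\}$. $\Delta_n=\{p\in[0,\infty)^n:\sum_ip_i=1\}$. For such a tree (or a subtree, whose leaves carry a subset $L$ of labels) define recursively: if the tree is a single leaf labelled $i$, then its value is $x_i$ and its entropy is $0$; otherwise, with left subtree $\mathbf{L}$ (label set $L$) and right subtree $\mathbf{D}$ (label set $D$), the value is $(x_1\oplus_S\cdots\oplus_S x_n)_{\mathbf{T}}=(\text{value of }\mathbf{L})\oplus_S(\text{value of }\mathbf{D})$, and for $p$ a probability vector indexed by the labels, with $P_L=\sum_{i\in L}p_i$, $P_D=\sum_{i\in D}p_i$, $$S_{\mathbf{T}}(p)=S(P_L)+P_L\,S_{\mathbf{L}}\big((p_i/P_L)_{i\in L}\big)+P_D\,S_{\mathbf{D}}\big((p_i/P_D)_{i\in D}\big),$$ where a term $P\,S_{\mathbf{A}}(\cdot/P)$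 is taken to be $0$ when $P=0$. *)

(* Defs.v *)
From mathcomp Require Import all_boot all_order all_algebra.
From mathcomp Require Import all_classical all_reals all_analysis.
Set Implicit Arguments. Unset Strict Implicit. Unset Printing Implicit Defensive.
Import Order.TTheory GRing.Theory Num.Theory.
Local Open Scope classical_set_scope.
Local Open Scope ring_scope.

(* Binary trees whose leaves carry labels in 'I_n (labels 0..n-1 stand for 1..n). *)
Inductive tree (n : nat) : Type :=
| Leaf of 'I_n
| Node of tree n & tree n.
Arguments Leaf {n}.
Arguments Node {n}.

Fixpoint leaves n (t : tree n) : seq 'I_n :=
  match t with Leaf i => [:: i] | Node l r => leaves l ++ leaves r end.

Definition n2tree n (t : tree n) : Prop := perm_eq (leaves t) (enum 'I_n).

(* x (+)_S y = min_{p in [0,1]} (p x + (1-p) y - T S(p)), written as the infimum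
   (which is attained since S is continuous on [0,1]). *)
Definition oplusS (R : realType) (T : R) (S : R -> R) (x y : R) : R :=
  inf [set p * x + (1 - p) * y - T * S p | p in `[0, 1]%classic].

Fixpoint treeval (R : realType) (T : R) (S : R -> R) n (t : tree n) (x : 'I_n -> R) : R :=
  match t with
  | Leaf i => x i
  | Node l r => oplusS T S (treeval T S l x) (treeval T S r x)
  end.

(* Tree entropy S_T(p); p is a vector on all labels, only the labels of the
   subtree matter. *)
Fixpoint tent (R : realType) (S : R -> R) n (t : tree n) (p : 'I_n -> R) : R :=
  match t with
  | Leaf _ => 0
  | Node l r =>
      let PL := \sum_(i <- leaves l) p i in
      let PD := \sum_(i <- leaves r) p i in
      S PL
      + (if PL == 0 then 0 else PL * tent S l (fun i => p i / PL))
      + (if PD == 0 then 0 else PD * tent S r (fun i => p i / PD))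
  end.

Definition probvec (R : realType) n (p : 'I_n -> R) : Prop :=
  (forall i, 0 <= p i) /\ \sum_i p i = 1.

(* Main.v *)
Require Import Defs.
From mathcomp Require Import all_boot all_order all_algebra.
From mathcomp Require Import all_classical all_reals all_analysis.
From mathcomp Require Import ring lra.
Import Order.TTheory GRing.Theory Num.Theory.
Import numFieldNormedType.Exports.
Local Open Scope classical_set_scope.
Local Open Scope ring_scope.

Lemma oplus_min (R : realType) (T : R) (S : R -> R)
  (hS : {within `[0%R, 1%R], continuous S}) (x y : R) :
  exists2 c, c \in `[0%R, 1%R] &
    oplusS T S x y = c * x + (1 - c) * y - T * S c /\
    forall p, p \in `[0%R, 1%R] -> oplusS T S x y <= p * x + (1 - p) * y - T * S p.
Proof.
pose f := fun p : R => p * x + (1 - p) * y - T * S p.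
have cf : {within `[0%R, 1%R], continuous f}.
  move=> u; rewrite /f.
  apply: cvgD; last first.
    apply: cvgN; apply: cvgMr; exact: hS.
  have : {within `[0%R, 1%R], continuous (fun p : R => p * x + (1 - p) * y)}.
    apply: continuous_subspaceT => v.
    apply: cvgD; [apply: cvgMl|apply: cvgMl; apply: cvgB]; try exact: cvg_id; exact: cvg_cst.
  by move=> /(_ u).
have [c c01 cmin] := EVT_min (@ler01 R) cf.
exists c => //; split.
  apply/eqP; rewrite eq_le; apply/andP; split.
    apply: ge_inf.
      exists (f c) => _ [p p01 <-]; apply: cmin; by rewrite inE.
    by exists c => //; rewrite -inE.
  apply: lb_le_inf.
    by exists (f c), c => //; rewrite -inE.
  move=> _ [p p01 <-]; apply: cmin; by rewrite inE.
move=> p p01; apply: ge_inf.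
  exists (f c) => _ [q q01 <-]; apply: cmin; by rewrite inE.
by exists p => //; rewrite -inE.
Qed.

Section Gen.
Variables (R : realType) (T : R) (S : R -> R).
Hypothesis hS : {within `[0%R, 1%R], continuous S}.
Variables (n : nat) (x : 'I_n -> R).

Lemma tent_ext (t : tree n) (p p' : 'I_n -> R) :
  {in leaves t, p =1 p'} -> tent S t p = tent S t p'.
Proof.
elim: t p p' => [i|l IHl r IHr] p p' /= e //.
have el : {in leaves l, p =1 p'} by move=> i hi; apply: e; rewrite mem_cat hi.
have er : {in leaves r, p =1 p'} by move=> i hi; apply: e; rewrite mem_cat hi orbT.
rewrite (eq_big_seq _ el) (eq_big_seq _ er).
congr (_ + _ + _).
  case: eqP => // _; congr (_ * _); apply: IHl => i hi /=; by rewrite el.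
case: eqP => // _; congr (_ * _); apply: IHr => i hi /=; by rewrite er.
Qed.

Lemma part (t : tree n) (a : R) :
  (forall q : 'I_n -> R, (forall i, 0 <= q i) -> \sum_(i <- leaves t) q i = 1 ->
      a <= \sum_(i <- leaves t) q i * x i - T * tent S t q) ->
  forall p : 'I_n -> R, (forall i, 0 <= p i) ->
  (\sum_(i <- leaves t) p i) * a <= \sum_(i <- leaves t) p i * x i -
    T * (if \sum_(i <- leaves t) p i == 0 then 0 else
          (\sum_(i <- leaves t) p i) * tent S t (fun i => p i / \sum_(i <- leaves t) p i)).
Proof.
move=> H p p0.
set P := \sum_(i <- leaves t) p i.
have P0 : 0 <= P by apply: sumr_ge0.
case: eqP => [Pe|Pn].
  have z : forall i, i \in leaves t -> p i = 0.
    move=> i hi; move/eqP: Pe; rewrite psumr_eq0; last by move=> j _; exact: p0.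
    by move/allP/(_ i hi)/eqP.
  rewrite Pe mul0r mulr0 subr0 big1_seq // => i /andP[_ hi]; by rewrite z // mul0r.
have Pp : 0 < P by rewrite lt_def P0 andbT; apply/eqP.
have := H (fun i => p i / P).
rewrite -big_distrl /= -/P divff; last by apply/eqP.
move=> /(_ (fun i => divr_ge0 (p0 i) P0) erefl) h.
have := ler_wpM2l P0 h.
rewrite mulrBr; congr (_ <= _ - _); last by rewrite mulrCA.
rewrite big_distrr /=; apply: eq_bigr => i _; field; exact/eqP.
Qed.

Lemma gen (t : tree n) : uniq (leaves t) ->
  (exists2 p : 'I_n -> R,
     [/\ forall i, 0 <= p i, forall i, i \notin leaves t -> p i = 0
       & \sum_(i <- leaves t) p i = 1] &
     treeval T S t x = \sum_(i <- leaves t) p i * x i - T * tent S t p) /\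
  (forall p : 'I_n -> R, (forall i, 0 <= p i) -> \sum_(i <- leaves t) p i = 1 ->
     treeval T S t x <= \sum_(i <- leaves t) p i * x i - T * tent S t p).
Proof.
elim: t => [i|l IHl r IHr] /=.
  move=> _; split.
    exists (fun j => (j == i)%:R); last by rewrite big_seq1 eqxx mul1r mulr0 subr0.
    split; first by move=> j; case: eqP.
      by move=> j; rewrite inE; case: eqP.
    by rewrite big_seq1 eqxx.
  by move=> p _; rewrite !big_seq1 => ->; rewrite mul1r mulr0 subr0.
rewrite cat_uniq => /and3P[ul dlr ur].
have [[pL [pL0 pLout pL1] eL] lbL] := IHl ul.
have [[pD [pD0 pDout pD1] eD] lbD] := IHr ur.
have [c c01 [ec lbc]] := @oplus_min R T S hS (treeval T S l x) (treeval T S r x).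
have notr : forall i, i \in leaves l -> i \notin leaves r.
  move=> i hi; apply/negP => hr; move/hasP: dlr; apply; by exists i.
move: c01; rewrite in_itv /= => /andP[c0 c1].
split.
  pose p := fun i => c * pL i + (1 - c) * pD i.
  have onl : forall i, i \in leaves l -> p i = c * pL i.
    by move=> i hi; rewrite /p (pDout i (notr i hi)) mulr0 addr0.
  have onr : forall i, i \in leaves r -> p i = (1 - c) * pD i.
    move=> i hi; rewrite /p pLout ?mulr0 ?add0r //.
    by apply/negP => hl; move: (notr i hl); rewrite hi.
  have sl : \sum_(i <- leaves l) p i = c.
    by rewrite (eq_big_seq _ onl) -big_distrr /= pL1 mulr1.
  have sr : \sum_(i <- leaves r) p i = 1 - c.
    by rewrite (eq_big_seq _ onr) -big_distrr /= pD1 mulr1.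
  exists p.
    split.
    - move=> i; rewrite /p addr_ge0 // mulr_ge0 //; lra.
    - move=> i; rewrite mem_cat negb_or => /andP[hl hr].
      by rewrite /p pLout // pDout // !mulr0 addr0.
    - by rewrite big_cat /= sl sr; lra.
  rewrite sl sr big_cat /=.
  have tl : (if c == 0 then 0 else c * tent S l (fun i => p i / c)) = c * tent S l pL.
    case: eqP => [->|cn]; first by rewrite mul0r.
    congr (_ * _); apply: tent_ext => i hi /=; rewrite onl //; field; exact/eqP.
  have tr : (if 1 - c == 0 then 0 else (1 - c) * tent S r (fun i => p i / (1 - c)))
      = (1 - c) * tent S r pD.
    case: eqP => [->|cn]; first by rewrite mul0r.
    congr (_ * _); apply: tent_ext => i hi /=; rewrite onr //; field; exact/eqP.
  rewrite tl tr ec eL eD.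
  have -> : \sum_(i <- leaves l) p i * x i = c * \sum_(i <- leaves l) pL i * x i.
    rewrite big_distrr /=; apply: eq_big_seq => i hi; by rewrite onl // mulrA.
  have -> : \sum_(i <- leaves r) p i * x i = (1 - c) * \sum_(i <- leaves r) pD i * x i.
    rewrite big_distrr /=; apply: eq_big_seq => i hi; by rewrite onr // mulrA.
  ring.
move=> p p0; rewrite big_cat /= => p1.
set PL := \sum_(i <- leaves l) p i.
set PD := \sum_(i <- leaves r) p i.
have PL0 : 0 <= PL by apply: sumr_ge0.
have PD0 : 0 <= PD by apply: sumr_ge0.
have hPD : PD = 1 - PL by move: p1; rewrite /PL /PD; lra.
have := part _ _ lbL p p0; have := part _ _ lbD p p0.
rewrite -/PL -/PD.
have := lbc PL; rewrite in_itv /= PL0 /= => /(_ ltac:(lra)).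
rewrite -hPD big_cat /=.
set A := (if PL == 0 then _ else _).
set B := (if PD == 0 then _ else _).
move=> h1 h2 h3.
rewrite !mulrDr; lra.
Qed.
End Gen.

Lemma sum_leaves (R : realType) n (t : tree n) (F : 'I_n -> R) :
  n2tree t -> \sum_(i <- leaves t) F i = \sum_i F i.
Proof. by move=> ht; rewrite (perm_big _ ht) /= big_enum. Qed.

Theorem theorem10p2 (R : realType) (T : R) (S : R -> R)
  (hScont : {within `[0%R, 1%R], continuous S})
  (hS0 : S 0 = 0) (hS1 : S 1 = 0)
  (n : nat) (hn : (2 <= n)%N) (t : tree n) (ht : n2tree t)
  (x : 'I_n -> R) :
  (exists2 p : 'I_n -> R, probvec p &
     treeval T S t x = \sum_i p i * x i - T * tent S t p) /\
  (forall p : 'I_n -> R, probvec p ->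
     treeval T S t x <= \sum_i p i * x i - T * tent S t p).
Proof.
have ut : uniq (leaves t) by rewrite (perm_uniq ht) enum_uniq.
have [[p [p0 _ p1] e] lb] := @gen R T S hScont n x t ut.
split.
  exists p; last by rewrite e (@sum_leaves R n t _ ht).
  by split => //; rewrite -(@sum_leaves R n t _ ht).
move=> q [q0 q1]; rewrite -(@sum_leaves R n t _ ht); apply: lb => //.
by rewrite (@sum_leaves R n t _ ht).
Qed.
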